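(* Let $a>0$ be the absolute constant such that for every $0<\eta\le1/2$ and every $m\le\exp(a\eta^2 d_k)$ there exist unit vectors $u_1,\dots,u_m\in\mathbb{R}^{d_k}$ with $\langle u_i,u_h\rangle\le\eta$ for all $i\ne h$. Fix dimensions $d,d_k>1$, $\rho\ge2$, let $L=e^\rho$, and let $0<\varepsilon\le\varepsilon_0/\sqrt d$ for a sufficiently small absolute constant $\varepsilon_0$. Suppose there is a (possibly randomized) coreset algorithm that, for any input collection of pairs $(K,V)$ with keys $k_i\in\mathbb{R}^{d_k}$, values $v_i\in\mathbb{R}^d$, $\|k_i\|_2,\|v_i\|_2\le1$, produces a sub-collection $(K',V')$ of the input pairs of size $S$ such that for any $q\in\mathbb{R}^{d_k}$ with $\|q\|_2\le\rho$, with constant probability, \[ \|\mathrm{Attn}(q,K,V)-\mathrm{Attn}(q,K',V')\|_2\le\varepsilon. \] Then \[ S=\Omega\!\left(d\cdot\min\{L/(\varepsilon\sqrt d),\;L^2,\;\exp(a d_k/\log^2L)\}\right). \]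
   Context: $\mathrm{Attn}(q,K,V)=\dfrac{\sum_i e^{q^Tk_i}v_i}{\sum_i e^{q^Tk_i}}$, sums over the key-value pairs in the collection. *)

(* Defs.v *)
From HB Require Import structures.
From mathcomp Require Import all_boot all_order all_algebra.
From mathcomp Require Import reals.
From mathcomp Require Import sequences.
From mathcomp.analysis Require Import exp.
Set Implicit Arguments. Unset Strict Implicit. Unset Printing Implicit Defensive.
Import Order.TTheory GRing.Theory Num.Theory.
Local Open Scope ring_scope.

Section Defs.
Variable R : realType.

Definition dotv (n : nat) (u v : 'rV[R]_n) : R := (u *m v^T) 0 0.
Definition norm2 (n : nat) (u : 'rV[R]_n) : R := Num.sqrt (dotv u u).

(* Attn(q, K, V) restricted to the sub-collection of pairs indexed by T:
   (sum_{i in T} e^{q.k_i} v_i) / (sum_{i in T} e^{q.k_i}).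
   (For T empty this is 0, since 0^-1 = 0 in MathComp.) *)
Definition attn (dk d n : nat) (q : 'rV[R]_dk) (K : 'I_n -> 'rV[R]_dk)
    (V : 'I_n -> 'rV[R]_d) (T : {set 'I_n}) : 'rV[R]_d :=
  (\sum_(i in T) expR (dotv q (K i)))^-1 *: \sum_(i in T) expR (dotv q (K i)) *: V i.

Definition packing_const (a : R) : Prop :=
  0 < a /\
  forall (eta : R) (dk m : nat), 0 < eta -> eta <= 2^-1 -> (0 < dk)%N ->
    m%:R <= expR (a * eta ^+ 2 * dk%:R) ->
    exists u : 'I_m -> 'rV[R]_dk,
      (forall i, norm2 (u i) = 1) /\
      (forall i h, i != h -> dotv (u i) (u h) <= eta).

Definition coreset_alg (d dk : nat) (rho eps p : R) (S : nat)
    (A : forall n : nat, ('I_n -> 'rV[R]_dk) -> ('I_n -> 'rV[R]_d) ->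
         {set 'I_n} -> R) : Prop :=
  forall (n : nat) (K : 'I_n -> 'rV[R]_dk) (V : 'I_n -> 'rV[R]_d),
    (forall i, norm2 (K i) <= 1 /\ norm2 (V i) <= 1) ->
    [/\ (forall T, 0 <= A n K V T),
        \sum_(T : {set 'I_n}) A n K V T = 1,
        (forall T, 0 < A n K V T -> (#|T| <= S)%N) &
        (forall q : 'rV[R]_dk, norm2 q <= rho ->
           p <= \sum_(T : {set 'I_n} |
                       norm2 (attn q K V setT - attn q K V T) <= eps) A n K V T)].

End Defs.

(* Main.v *)
Require Import Defs.
From HB Require Import structures.
From mathcomp Require Import all_boot all_order all_algebra.
From mathcomp Require Import reals.
From mathcomp Require Import sequences.
From mathcomp.analysis Require Import exp.
From mathcomp Require Import ring lra.
Import Order.TTheory GRing.Theory Num.Theory.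
Local Open Scope ring_scope.

Section Aux.
Variable R : realType.

Lemma dotvE n (u v : 'rV[R]_n) : dotv u v = \sum_k u 0 k * v 0 k.
Proof. by rewrite /dotv !mxE; apply: eq_bigr => k _; rewrite mxE. Qed.

Lemma sum_ind d (m : nat) : \sum_(j < d) ((m == j)%:R : R) = (m < d)%:R.
Proof.
case: (ltnP m d) => h.
  rewrite (bigD1 (Ordinal h)) //= eqxx big1 ?addr0 // => j hj.
  have -> : (m == j) = false.
    apply/negbTE; apply: contra hj => /eqP e; apply/eqP/val_inj => /=.
    by rewrite e.
  by [].
rewrite big1 // => j _.
by rewrite (gtn_eqF (leq_trans (ltn_ord j) h)).
Qed.

Lemma boolsq (b : bool) : (b%:R : R) * b%:R = b%:R.
Proof. by case: b; rewrite ?mulr1 ?mulr0. Qed.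

Definition e0 (dk : nat) : 'rV[R]_dk := \row_j ((0%N == j)%:R).
Definition Kh dk d N : 'I_(d+N) -> 'rV[R]_dk :=
  fun i => if (i < d)%N then e0 dk else 0.
Definition Vh d N : 'I_(d+N) -> 'rV[R]_d := fun i => \row_j (((i:nat) == j)%:R).

Lemma dot_e0 dk : (0 < dk)%N -> dotv (e0 dk) (e0 dk) = 1.
Proof.
move=> h; rewrite dotvE.
under eq_bigr => k _ do rewrite !mxE boolsq.
by rewrite sum_ind h.
Qed.

Lemma dot_Vh d N i : dotv (Vh d N i) (Vh d N i) = ((i < d)%N)%:R.
Proof.
rewrite dotvE.
under eq_bigr => k _ do rewrite !mxE boolsq.
by rewrite sum_ind.
Qed.

Lemma dotvZl n a (u v : 'rV[R]_n) : dotv (a *: u) v = a * dotv u v.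
Proof.
rewrite !dotvE mulr_sumr; apply: eq_bigr => k _; by rewrite mxE mulrA.
Qed.

Lemma dotv0 n (u : 'rV[R]_n) : dotv u 0 = 0.
Proof. rewrite dotvE big1 // => k _; by rewrite mxE mulr0. Qed.

Lemma sqrt_le1 (x : R) : 0 <= x -> x <= 1 -> Num.sqrt x <= 1.
Proof. move=> h0 h1; by rewrite -sqrtr1 ler_wsqrtr. Qed.


Lemma weight_eq dk d N (rho : R) (i : 'I_(d+N)) : (0 < dk)%N ->
  expR (dotv (rho *: e0 dk) (Kh dk d N i)) = if (i < d)%N then expR rho else 1.
Proof.
move=> h; rewrite /Kh; case: (i < d)%N.
  by rewrite dotvZl dot_e0 // mulr1.
by rewrite dotv0 expR0.
Qed.

Lemma attn_coord dk d N (q : 'rV[R]_dk) (w : 'I_(d+N) -> R) T j :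
  (forall i, expR (dotv q (Kh dk d N i)) = w i) ->
  (attn q (Kh dk d N) (Vh d N) T) 0 j =
  (\sum_(i in T) w i)^-1 * \sum_(i in T) w i * ((i:nat) == j)%:R.
Proof.
move=> hw; rewrite /attn mxE summxE; congr (_^-1 * _).
  by apply: eq_bigr => i _; rewrite hw.
by apply: eq_bigr => i _; rewrite hw !mxE.
Qed.

Lemma coord_sum d N (T : {set 'I_(d+N)}) (j : 'I_d) (L : R) :
  \sum_(i in T) (if (i < d)%N then L else 1) * ((i:nat) == j)%:R
  = if lshift N j \in T then L else 0.
Proof.
rewrite big_mkcond (bigD1 (lshift N j)) //= big1 ?addr0.
  by rewrite ltn_ord eqxx mulr1.
move=> i hi; case: (i \in T) => //.
have -> : ((i:nat) == j) = false.
  apply/negbTE; apply: contra hi => /eqP e; apply/eqP/val_inj => /=; exact e.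
by rewrite mulr0.
Qed.

Lemma W_full d N (L : R) :
  \sum_(i in [set: 'I_(d+N)]) (if (i < d)%N then L else 1) = d%:R * L + N%:R.
Proof.
rewrite (eq_bigl xpredT); last by move=> i; rewrite in_setT.
rewrite big_split_ord /=.
under eq_bigr => i _ do rewrite ltn_ord.
under [X in _ + X]eq_bigr => i _ do rewrite ltnNge leq_addr /=.
by rewrite !sumr_const !card_ord mulr_natl.
Qed.

Lemma W_le d N (L : R) (T : {set 'I_(d+N)}) : 1 <= L ->
  \sum_(i in T) (if (i < d)%N then L else 1) <= #|T|%:R + d%:R * L.
Proof.
move=> hL.
have h1 : \sum_(i in T) (if (i < d)%N then L else 1) <=
          \sum_(i in T) (1 + (if (i < d)%N then L else 0)).
  apply: ler_sum => i _; case: (i < d)%N; lra.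
apply: (le_trans h1); rewrite big_split /= sumr_const.
rewrite lerD2l.
have h2 : \sum_(i in T) (if (i < d)%N then L else 0) <=
          \sum_(i : 'I_(d+N)) (if (i < d)%N then L else 0).
  rewrite [X in _ <= X](bigID (fun i => i \in T)) /= lerDl.
  apply: sumr_ge0 => i _; case: (i < d)%N; lra.
apply: (le_trans h2); rewrite big_split_ord /=.
under eq_bigr => i _ do rewrite ltn_ord.
under [X in _ + X]eq_bigr => i _ do rewrite ltnNge leq_addr /=.
by rewrite !sumr_const !card_ord mulr_natl mul0rn addr0.
Qed.


Lemma core dk d N (rho eps : R) (T : {set 'I_(d+N)}) :
  (0 < dk)%N -> (0 < d)%N -> 0 < eps -> 0 <= rho ->
  eps * (d%:R * expR rho + N%:R) < Num.sqrt d%:R * expR rho ->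
  norm2 (attn (rho *: e0 dk) (Kh dk d N) (Vh d N) setT
         - attn (rho *: e0 dk) (Kh dk d N) (Vh d N) T) <= eps ->
  d%:R * expR rho + N%:R <
    2 * \sum_(i in T) (if (i < d)%N then expR rho else 1).
Proof.
move=> hdk hd he hr hW hn.
set L := expR rho.
have L0 : 0 < L by apply: expR_gt0.
set w := fun i : 'I_(d+N) => if (i < d)%N then L else 1.
have hw : forall i, expR (dotv (rho *: e0 dk) (Kh dk d N i)) = w i.
  by move=> i; rewrite weight_eq.
set W := d%:R * L + N%:R.
set WT := \sum_(i in T) w i.
have dpos : 1 <= (d%:R : R) by rewrite ler1n.
have N0 : 0 <= (N%:R : R) by rewrite ler0n.
have W0 : 0 < W by rewrite /W; nra.
set phi := W^-1 * L.
set gam := WT^-1 * L.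
have phiW : phi * W = L by rewrite /phi mulrAC mulVf ?mul1r // gt_eqF.
have phi0 : 0 < phi by rewrite /phi mulr_gt0 ?invr_gt0.
have WT0 : 0 <= WT by apply: sumr_ge0 => i _; rewrite /w; case: (i < d)%N; lra.
have gam0 : 0 <= gam by rewrite /gam mulr_ge0 ?invr_ge0 // ltW.
set E := _ - _ in hn.
have Ecoord : forall j, E 0 j = phi - gam * (lshift N j \in T)%:R.
  move=> j.
  have -> : E 0 j = (attn (rho *: e0 dk) (Kh dk d N) (Vh d N) setT) 0 j
     - (attn (rho *: e0 dk) (Kh dk d N) (Vh d N) T) 0 j by rewrite /E !mxE.
  rewrite !(@attn_coord _ _ _ _ _ _ _ hw).
  rewrite !coord_sum in_setT W_full.
  by case: (lshift N j \in T); rewrite ?mulr1 ?mulr0 ?subr0.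
set s := Num.sqrt (d%:R : R) in hW.
have s0 : 0 <= s by apply: sqrtr_ge0.
have ss : s * s = d%:R by rewrite -expr2 sqr_sqrtr // ler0n.
have epsphi : eps < s * phi.
  have : eps * W < (s * phi) * W by rewrite -mulrA phiW.
  by rewrite ltr_pM2r.
have eps2 : eps ^+ 2 < d%:R * phi ^+ 2.
  rewrite -ss; nra.
have dotle : dotv E E <= eps ^+ 2.
  have hsq := @sqr_sqrtr _ (dotv E E).
  have hge : 0 <= dotv E E.
    by rewrite dotvE; apply: sumr_ge0 => k _; rewrite -expr2 sqr_ge0.
  move: hn; rewrite /norm2 => hn.
  rewrite -(hsq hge); have := sqrtr_ge0 (dotv E E); nra.
have key : 0 < gam < 2 * phi.
  apply/negPn/negP => hbad.
  have each : forall j : 'I_d, phi ^+ 2 <= E 0 j * E 0 j.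
    move=> j; rewrite Ecoord; case: (lshift N j \in T); last first.
      by rewrite mulr0 subr0 expr2.
    rewrite mulr1.
    have : gam <= 0 \/ 2 * phi <= gam.
      case: (boolP (0 < gam)) => g1.
        right; move: hbad; rewrite g1 /= -leNgt; done.
      by left; rewrite leNgt.
    case=> hg; nra.
  have : d%:R * phi ^+ 2 <= dotv E E.
    have -> : d%:R * phi ^+ 2 = \sum_(j < d) phi ^+ 2 by rewrite sumr_const card_ord mulr_natl.
    rewrite dotvE.
    by apply: ler_sum => j _; apply: each.
  lra.
case/andP: key => g1 g2.
have WTpos : 0 < WT.
  rewrite lt_def WT0 andbT; apply/eqP => e; move: g1; by rewrite /gam e invr0 mul0r ltxx.
have gamWT : gam * WT = L by rewrite /gam mulrAC mulVf ?mul1r // gt_eqF.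
have : phi * W < phi * (2 * WT) by nra.
by rewrite ltr_pM2l.
Qed.


Lemma dotvZr n a (u v : 'rV[R]_n) : dotv u (a *: v) = a * dotv u v.
Proof.
rewrite !dotvE mulr_sumr; apply: eq_bigr => k _; by rewrite mxE mulrCA.
Qed.

Lemma norms dk d N i : (0 < dk)%N ->
  norm2 (Kh dk d N i) <= 1 /\ norm2 (Vh d N i) <= 1.
Proof.
move=> h; split; rewrite /norm2.
  rewrite /Kh; case: (i < d)%N; apply: sqrt_le1;
  rewrite ?dot_e0 ?dotv0 //; lra.
by rewrite dot_Vh; apply: sqrt_le1; case: (i < d)%N => /=; lra.
Qed.

Lemma normq dk (rho : R) : (0 < dk)%N -> 0 <= rho -> norm2 (rho *: e0 dk) <= rho.
Proof.
move=> h hr; rewrite /norm2 dotvZl dotvZr dot_e0 // mulr1 -expr2 sqrtr_sqr.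
by rewrite ger0_norm.
Qed.

End Aux.

Theorem theorem11 (R : realType) (a : R) :
  packing_const a ->
  forall p : R, 0 < p -> p <= 1 ->
  exists eps0 c : R, 0 < eps0 /\ 0 < c /\
    forall (d dk : nat), (1 < d)%N -> (1 < dk)%N ->
    forall rho eps : R, 2 <= rho -> 0 < eps -> eps <= eps0 / Num.sqrt d%:R ->
    forall (S : nat) A, @coreset_alg R d dk rho eps p S A ->
      let L := expR rho in
      c * d%:R * Num.min (Num.min (L / (eps * Num.sqrt d%:R)) (L ^+ 2))
                         (expR (a * dk%:R / (ln L) ^+ 2)) <= S%:R.
Proof.
move=> _ p p0 p1.
exists (1/16), (1/8); split; first lra; split; first lra.
move=> d dk hd hdk rho eps hr he heps S A HA; cbv zeta; set L := expR rho.
have hdk0 : (0 < dk)%N by apply: ltnW.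
have hd0 : (0 < d)%N by apply: ltnW.
have hr0 : 0 <= rho by lra.
set s := Num.sqrt (d%:R : R) in heps *.
have dpos : 2 <= (d%:R : R) by rewrite ler_nat.
have ss : s * s = d%:R by rewrite -expr2 sqr_sqrtr // ler0n.
have s0 : 0 < s by rewrite sqrtr_gt0; lra.
have es : eps * s <= 1/16 by move: heps; rewrite ler_pdivlMr.
have L1 : 1 <= L by rewrite /L leNgt expR_lt1 -leNgt.
set y := s * L / eps.
have hy : y * eps = s * L by rewrite /y mulfVK ?gt_eqF.
have y0 : 0 < y by rewrite /y divr_gt0 // mulr_gt0 //; lra.
have dL : d%:R * L <= y / 16.
  have -> : d%:R * L = y * (eps * s) by rewrite -ss mulrA hy; ring.
  have : y * (eps * s) <= y * (1/16) by rewrite ler_pM2l.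
  lra.
have y16 : 1 <= y / 16.
  have : 1 <= d%:R * L by nra.
  lra.
set N := Num.trunc (y / 2).
have hN1 : (N%:R : R) <= y / 2 by rewrite truncn_le; lra.
have hN2 : y / 2 < (N%:R : R) + 1 by rewrite natr1; apply: truncnS_gt.
have hW : eps * (d%:R * L + N%:R) < s * L.
  have : eps * (d%:R * L + N%:R) <= eps * (y / 16 + y / 2) by rewrite ler_pM2l //; lra.
  have : eps * (y / 16 + y / 2) = (9/16) * (s * L).
  by rewrite -hy; field.
  have : 0 < s * L by apply: mulr_gt0 => //; lra.
  lra.
have [_ _ Hsz Hgood] := HA (d + N)%N (Kh R dk d N) (Vh R d N) (fun i => norms R dk d N i hdk0).
have Hp := Hgood (rho *: e0 R dk) (normq R dk rho hdk0 hr0).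
set good := fun T : {set 'I_(d+N)} =>
  norm2 (attn (rho *: e0 R dk) (Kh R dk d N) (Vh R d N) setT
         - attn (rho *: e0 R dk) (Kh R dk d N) (Vh R d N) T) <= eps.
have [T [hT1 hT2]] : exists T, good T /\ 0 < A (d + N)%N (Kh R dk d N) (Vh R d N) T.
  case: (pickP (fun T => good T && (0 < A (d + N)%N (Kh R dk d N) (Vh R d N) T))).
    by move=> T /andP[h1 h2]; exists T.
  move=> hnone; exfalso.
  have : \sum_(T | good T) A (d + N)%N (Kh R dk d N) (Vh R d N) T <= 0.
    rewrite big1 // => T hT.
    have := hnone T; rewrite hT /= => /negbT; rewrite -leNgt => hle.
    have [h0 _ _ _] := HA (d + N)%N (Kh R dk d N) (Vh R d N) (fun i => norms R dk d N i hdk0).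
    by apply/eqP; rewrite eq_le hle h0.
  move: Hp; rewrite /good; lra.
have hS : (#|T| <= S)%N by apply: Hsz.
have hc := core R dk d N rho eps T hdk0 hd0 he hr0 hW hT1.
have hWT := W_le R d N L T L1.
have hTS : (#|T|%:R : R) <= S%:R by rewrite ler_nat.
have hmin : Num.min (Num.min (L / (eps * s)) (L ^+ 2))
              (expR (a * dk%:R / (ln L) ^+ 2)) <= L / (eps * s).
  by rewrite ge_min; apply/orP; left; rewrite ge_min lexx.
have hyeq : d%:R * (L / (eps * s)) = y.
  rewrite -ss /y; field; rewrite ?gt_eqF //; apply/andP; split; rewrite gt_eqF //.
have hmin2 : 1 / 8 * d%:R * Num.min (Num.min (L / (eps * s)) (L ^+ 2))
              (expR (a * dk%:R / (ln L) ^+ 2)) <= y / 8.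
  rewrite -mulrA; have : d%:R * Num.min (Num.min (L / (eps * s)) (L ^+ 2))
              (expR (a * dk%:R / (ln L) ^+ 2)) <= y.
    by rewrite -hyeq ler_pM2l //; lra.
  lra.
apply: (le_trans hmin2).
rewrite -/L in hc.
lra.
Qed.
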